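(* Let $\beta,\delta\in(0,1)$, $K>0$, and let $\eta_1,\eta_2\ge0$ be constants. Consider $$\frac{df}{dt}=\tfrac12 fm\beta L-\delta f-\eta_1 f^{3/2},\qquad \frac{dm}{dt}=\tfrac12 fm\beta L-\delta m+\eta_2 m^{3/2},\qquad L=1-\frac{f+m}{K}.$$ If $\beta K<2\delta-\eta_2\sqrt K$ and $\delta>\eta_2\sqrt K$, then the trivial equilibrium $(0,0)$ is globally asymptotically stable.
   Context: $f,m$ are female and male densities, with populations considered in the region $0\le f,m$, $f+m\le K$. The model uses power-law female harvesting and male stocking. *)

(* Defs.v *)
From Stdlib Require Import Reals.
From Coquelicot Require Import Coquelicot.
Open Scope R_scope.

(* x^{3/2} for x >= 0 (the model is only considered for nonnegative densities). *)
Definition pow32 (x : R) : R := x * sqrt x.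

Definition Lfac (K f m : R) : R := 1 - (f + m) / K.

Definition rhs_f (beta delta eta1 K f m : R) : R :=
  / 2 * f * m * beta * Lfac K f m - delta * f - eta1 * pow32 f.

Definition rhs_m (beta delta eta2 K f m : R) : R :=
  / 2 * f * m * beta * Lfac K f m - delta * m + eta2 * pow32 m.

Definition in_region (K f m : R) : Prop := 0 <= f /\ 0 <= m /\ f + m <= K.

Definition is_solution (beta delta eta1 eta2 K : R) (f m : R -> R) : Prop :=
  filterlim f (at_right 0) (locally (f 0)) /\
  filterlim m (at_right 0) (locally (m 0)) /\
  (forall t, 0 < t ->
     is_derive f t (rhs_f beta delta eta1 K (f t) (m t)) /\
     is_derive m t (rhs_m beta delta eta2 K (f t) (m t))).

Definition GAS_origin (beta delta eta1 eta2 K : R) : Prop :=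
  (forall eps, 0 < eps -> exists r, 0 < r /\
     forall f m, is_solution beta delta eta1 eta2 K f m ->
       in_region K (f 0) (m 0) -> Rabs (f 0) + Rabs (m 0) < r ->
       forall t, 0 <= t -> Rabs (f t) + Rabs (m t) < eps) /\
  (forall f m, is_solution beta delta eta1 eta2 K f m ->
     in_region K (f 0) (m 0) ->
     is_lim f p_infty 0 /\ is_lim m p_infty 0).

(* Main.v *)
Require Import Defs.
From Stdlib Require Import Reals Lra Psatz.
From Coquelicot Require Import Coquelicot.
Open Scope R_scope.

Lemma ballR x e y : ball x e y <-> Rabs (y - x) < e.
Proof. reflexivity. Qed.

Definition RC (g : R -> R) := filterlim g (at_right 0) (locally (g 0)).

Lemma RC_cont g : continuous g 0 -> RC g.
Proof.
  intros H P HP. apply H in HP. destruct HP as [d Hd]. exists d.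
  intros y Hy _. apply Hd. exact Hy.
Qed.

Lemma RC_comp g h : RC g -> continuous h (g 0) -> RC (fun t => h (g t)).
Proof. intros Hg Hh. unfold RC. eapply filterlim_comp; [exact Hg| exact Hh]. Qed.

Lemma RC_plus g h : RC g -> RC h -> RC (fun t => g t + h t).
Proof.
  intros Hg Hh. unfold RC.
  eapply filterlim_comp_2; [exact Hg| exact Hh| ].
  apply (filterlim_plus (g 0) (h 0)).
Qed.

Lemma RC_mult g h : RC g -> RC h -> RC (fun t => g t * h t).
Proof.
  intros Hg Hh. unfold RC.
  eapply filterlim_comp_2; [exact Hg| exact Hh| ].
  apply (filterlim_mult (g 0) (h 0)).
Qed.

Lemma is_derive_eq (f : R -> R) x l l' : is_derive f x l -> l = l' -> is_derive f x l'.
Proof. intros H ->. exact H. Qed.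

Lemma mono (g dg : R -> R) (T : R) : RC g ->
  (forall t, 0 < t <= T -> is_derive g t (dg t) /\ dg t <= 0) ->
  forall t, 0 <= t <= T -> g t <= g 0.
Proof.
  intros Hrc Hd t [Ht0 HtT].
  destruct (Req_dec t 0) as [->|Hne]; [lra|].
  assert (Hs : forall s, 0 < s < t -> g t <= g s).
  { intros s Hs. destruct (MVT_gen g s t dg) as [c [Hc Heq]].
    - intros x Hx. rewrite Rmin_left in Hx by lra. rewrite Rmax_right in Hx by lra.
      apply Hd; lra.
    - intros x Hx. rewrite Rmin_left in Hx by lra. rewrite Rmax_right in Hx by lra.
      apply continuity_pt_filterlim. apply (ex_derive_continuous (K:=R_AbsRing) (V:=R_NormedModule)).
      exists (dg x); apply Hd; lra.
    - rewrite Rmin_left in Hc by lra. rewrite Rmax_right in Hc by lra.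
      assert (dg c <= 0) by (apply Hd; lra). nra. }
  apply Rnot_lt_le; intro Hlt.
  assert (Hp : 0 < g t - g 0) by lra.
  assert (HB := Hrc _ (locally_ball (g 0) (mkposreal _ Hp))).
  destruct HB as [d Hd'].
  set (s := Rmin (d/2) (t/2)).
  assert (Hs0 : 0 < s) by (unfold s; destruct d; simpl; apply Rmin_glb_lt; lra).
  assert (Hs1 : s <= d/2) by apply Rmin_l.
  assert (Hs2 : s <= t/2) by apply Rmin_r.
  specialize (Hd' s). rewrite ballR in Hd'. simpl in Hd'.
  assert (Hb : Rabs (g s - g 0) < g t - g 0).
  { apply Hd'. rewrite Rminus_0_r, Rabs_pos_eq; destruct d; simpl in *; lra. lra. }
  apply Rabs_def2 in Hb. specialize (Hs s). lra.
Qed.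

Lemma gron (q dq : R -> R) (C T : R) : RC q -> q 0 <= 0 ->
  (forall t, 0 < t <= T -> is_derive q t (dq t) /\ dq t <= C * q t) ->
  forall t, 0 <= t <= T -> q t <= 0.
Proof.
  intros Hrc H0 Hd t Ht.
  assert (He : forall t, is_derive (fun t => exp (-(C*t))) t (-C * exp (-(C*t)))).
  { intro x. auto_derive; [auto| ring]. }
  assert (Hm := mono (fun t => q t * exp (-(C*t))) (fun t => (dq t - C * q t) * exp (-(C*t))) T).
  assert (Hle : q t * exp (-(C*t)) <= q 0 * exp (-(C*0))).
  { apply Hm; [| |exact Ht].
    - apply RC_mult; [exact Hrc|]. apply RC_cont. apply (ex_derive_continuous (K:=R_AbsRing) (V:=R_NormedModule)).
      eexists; apply He.
    - intros x Hx. destruct (Hd x Hx) as [Hq Hq'].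
      split.
      + eapply is_derive_eq. apply (is_derive_mult _ _ _ _ _ Hq (He x)).
        intros; apply Rmult_comm. simpl. unfold mult, plus; simpl. ring.
      + assert (0 < exp (-(C*x))) by apply exp_pos. nra. }
  rewrite Rmult_0_r, Ropp_0, exp_0, Rmult_1_r in Hle.
  assert (0 < exp (-(C*t))) by apply exp_pos. nra.
Qed.

Lemma bound (g : R -> R) T : RC g -> (forall t, 0 < t <= T -> ex_derive g t) -> 0 <= T ->
  exists B, forall t, 0 <= t <= T -> Rabs (g t) <= B.
Proof.
  intros Hrc Hd HT.
  set (gt := fun t => g (Rmax 0 t)).
  assert (Hc : forall c, 0 <= c <= T -> continuity_pt gt c).
  { intros c Hc. apply continuity_pt_filterlim. unfold gt.
    destruct (Req_dec c 0) as [->|Hne].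
    - rewrite Rmax_left by lra. intros P HP.
      destruct (Hrc P HP) as [d Hd']. exists d. intros y Hy.
      destruct (Rle_lt_dec y 0).
      + rewrite Rmax_left by lra. apply locally_singleton; exact HP.
      + rewrite Rmax_right by lra. apply Hd'; [exact Hy| lra].
    - assert (Hcg : continuous g c).
      { apply (ex_derive_continuous (K:=R_AbsRing) (V:=R_NormedModule)). apply Hd; lra. }
      rewrite Rmax_right by lra. intros P HP. destruct (Hcg P HP) as [d Hd'].
      assert (Hp : 0 < Rmin d c) by (destruct d; simpl; apply Rmin_glb_lt; lra).
      exists (mkposreal _ Hp). intros y Hy. rewrite ballR in Hy. simpl in Hy.
      assert (Hy1 := Rmin_l d c). assert (Hy2 := Rmin_r d c).
      apply Rabs_def2 in Hy.
      rewrite Rmax_right by lra. apply Hd'. rewrite ballR. apply Rabs_def1; lra. }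
  destruct (continuity_ab_maj gt 0 T HT Hc) as [Mx [HM _]].
  destruct (continuity_ab_min gt 0 T HT Hc) as [mx [Hmn _]].
  exists (Rabs (gt Mx) + Rabs (gt mx)). intros t Ht.
  specialize (HM t Ht). specialize (Hmn t Ht). unfold gt in *.
  rewrite (Rmax_right 0 t) in HM, Hmn by lra.
  apply Rabs_le. split.
  - assert (H1 := Rabs_pos (g (Rmax 0 Mx))). assert (H2 := Rle_abs (- g (Rmax 0 mx))).
    rewrite Rabs_Ropp in H2. lra.
  - assert (H1 := Rabs_pos (g (Rmax 0 mx))). assert (H2 := Rle_abs (g (Rmax 0 Mx))). lra.
Qed.

Lemma negsq_der x : is_derive (fun y => Rmin y 0 ^ 2) x (2 * Rmin x 0).
Proof.
  destruct (Rlt_or_le x 0) as [Hx|Hx].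
  - assert (Hp : 0 < -x) by lra.
    apply (is_derive_ext_loc (fun y => y ^ 2)).
    + exists (mkposreal _ Hp). intros y Hy. rewrite ballR in Hy. simpl in Hy.
      apply Rabs_def2 in Hy. rewrite Rmin_left by lra. reflexivity.
    + rewrite Rmin_left by lra. auto_derive; [auto|ring].
  - destruct (Req_dec x 0) as [->|Hne].
    + apply is_derive_Reals. intros eps Heps. exists (mkposreal _ Heps).
      intros h Hh Hh2. simpl in Hh2. rewrite Rplus_0_l, Rmin_left with (x:=0) by lra.
      destruct (Rlt_or_le h 0).
      * rewrite Rmin_left by lra.
        replace ((h ^ 2 - 0 ^ 2) / h - 2 * 0) with h by (field; lra). exact Hh2.
      * rewrite Rmin_right by lra.
        replace ((0 ^ 2 - 0 ^ 2) / h - 2 * 0) with 0 by (field; lra).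
        rewrite Rabs_R0; lra.
    + assert (Hp : 0 < x) by lra.
      apply (is_derive_ext_loc (fun y => 0)).
      * exists (mkposreal _ Hp). intros y Hy. rewrite ballR in Hy. simpl in Hy.
        apply Rabs_def2 in Hy. rewrite Rmin_right by lra. simpl. ring.
      * rewrite Rmin_right by lra. apply (is_derive_eq _ _ 0). apply (is_derive_const (K:=R_AbsRing) (V:=R_NormedModule)). unfold zero; simpl; lra.
Qed.

Lemma rhs_f_eq beta delta eta1 K f m :
  rhs_f beta delta eta1 K f m = f * (/2 * m * beta * Lfac K f m - delta - eta1 * sqrt f).
Proof. unfold rhs_f, pow32. ring. Qed.

Lemma rhs_m_eq beta delta eta2 K f m :
  rhs_m beta delta eta2 K f m = m * (/2 * f * beta * Lfac K f m - delta + eta2 * sqrt m).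
Proof. unfold rhs_m, pow32. ring. Qed.

Lemma negsq_cont x : continuous (fun y => Rmin y 0 ^ 2) x.
Proof. apply (ex_derive_continuous (K:=R_AbsRing) (V:=R_NormedModule)). eexists; apply negsq_der. Qed.

Lemma prodL beta K B x y z : 0 < beta -> 0 < K -> Rabs x <= B -> Rabs y <= B -> Rabs z <= B ->
  /2 * x * beta * Lfac K y z <= beta * B * (1 + 2 * B / K).
Proof.
  intros Hb HK Hx Hy Hz. unfold Lfac.
  set (l := 1 - (y + z) / K).
  assert (Hl : Rabs l <= 1 + 2 * B / K).
  { apply Rabs_le_between in Hy. apply Rabs_le_between in Hz. unfold l, Rdiv.
    assert (0 < / K) by (apply Rinv_0_lt_compat; lra).
    apply Rabs_le. split; nra. }
  assert (Hxl : x * l <= Rabs x * Rabs l).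
  { rewrite <- Rabs_mult. apply Rle_abs. }
  assert (H0 := Rabs_pos x). assert (H1 := Rabs_pos l).
  assert (Rabs x * Rabs l <= B * (1 + 2 * B / K)) by (apply Rmult_le_compat; lra).
  replace (/2 * x * beta * l) with (beta * (x * l) / 2) by field.
  assert (0 <= Rabs x * Rabs l) by nra.
  replace (beta * B * (1 + 2 * B / K)) with (beta * (B * (1 + 2 * B / K))) by ring.
  set (W := B * (1 + 2 * B / K)) in *.
  assert (0 <= beta * W) by (apply Rmult_le_pos; lra).
  assert (beta * (x * l) <= beta * W) by (apply Rmult_le_compat_l; lra).
  lra.
Qed.

Section Main.
Variables (beta delta K eta1 eta2 : R).
Hypotheses (Hb : 0 < beta < 1) (Hd : 0 < delta < 1) (HK : 0 < K) (He1 : 0 <= eta1) (He2 : 0 <= eta2)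
  (Hc1 : beta * K < 2 * delta - eta2 * sqrt K) (Hc2 : delta > eta2 * sqrt K).

Lemma invariance f m : is_solution beta delta eta1 eta2 K f m -> in_region K (f 0) (m 0) ->
  forall T, 0 < T -> forall t, 0 <= t <= T -> 0 <= f t /\ 0 <= m t /\ f t + m t <= K.
Proof.
  intros [Hf0 [Hm0 Hder]] [Hr1 [Hr2 Hr3]] T HT.
  assert (Hexf : forall t, 0 < t <= T -> ex_derive f t).
  { intros t Ht. eexists. apply (Hder t ltac:(lra)). }
  assert (Hexm : forall t, 0 < t <= T -> ex_derive m t).
  { intros t Ht. eexists. apply (Hder t ltac:(lra)). }
  destruct (bound f T Hf0 Hexf ltac:(lra)) as [Bf HBf].
  destruct (bound m T Hm0 Hexm ltac:(lra)) as [Bm HBm].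
  assert (HBf0 : 0 <= Bf) by (specialize (HBf 0 ltac:(lra)); assert (H := Rabs_pos (f 0)); lra).
  assert (HBm0 : 0 <= Bm) by (specialize (HBm 0 ltac:(lra)); assert (H := Rabs_pos (m 0)); lra).
  set (B := Bf + Bm).
  assert (HfB : forall t, 0 <= t <= T -> Rabs (f t) <= B) by (intros t Ht; specialize (HBf t Ht); unfold B; lra).
  assert (HmB : forall t, 0 <= t <= T -> Rabs (m t) <= B) by (intros t Ht; specialize (HBm t Ht); unfold B; lra).
  set (M := beta * B * (1 + 2 * B / K)).
  assert (Hfpos : forall t, 0 <= t <= T -> 0 <= f t).
  { intros t Ht.
    assert (Hq : Rmin (f t) 0 ^ 2 <= 0).
    { apply (gron (fun t => Rmin (f t) 0 ^ 2)
        (fun t => 2 * Rmin (f t) 0 * rhs_f beta delta eta1 K (f t) (m t)) (2 * M) T); [| | |exact Ht].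
      - apply (RC_comp f (fun y => Rmin y 0 ^ 2)); [exact Hf0| apply negsq_cont].
      - rewrite Rmin_right by lra. simpl; lra.
      - intros x Hx. destruct (Hder x ltac:(lra)) as [Hdf _]. split.
        + eapply is_derive_eq. apply (is_derive_comp (fun y => Rmin y 0 ^ 2) f x _ _ (negsq_der (f x)) Hdf).
          simpl. unfold scal; simpl; unfold mult; simpl. ring.
        + rewrite rhs_f_eq.
          assert (HG : /2 * m x * beta * Lfac K (f x) (m x) - delta - eta1 * sqrt (f x) <= M).
          { assert (H1 := prodL beta K B (m x) (f x) (m x) ltac:(lra) HK (HmB x ltac:(lra)) (HfB x ltac:(lra)) (HmB x ltac:(lra))).
            assert (H2 := sqrt_pos (f x)). fold M in H1. nra. }
          destruct (Rlt_or_le (f x) 0).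
          * rewrite Rmin_left by lra. nra.
          * rewrite Rmin_right by lra. lra. }
    destruct (Rlt_or_le (f t) 0); [|lra].
    rewrite Rmin_left in Hq by lra. nra. }
  assert (Hmpos : forall t, 0 <= t <= T -> 0 <= m t).
  { intros t Ht.
    assert (Hq : Rmin (m t) 0 ^ 2 <= 0).
    { apply (gron (fun t => Rmin (m t) 0 ^ 2)
        (fun t => 2 * Rmin (m t) 0 * rhs_m beta delta eta2 K (f t) (m t)) (2 * (M + eta2 * sqrt B)) T); [| | |exact Ht].
      - apply (RC_comp m (fun y => Rmin y 0 ^ 2)); [exact Hm0| apply negsq_cont].
      - rewrite Rmin_right by lra. simpl; lra.
      - intros x Hx. destruct (Hder x ltac:(lra)) as [_ Hdm]. split.
        + eapply is_derive_eq. apply (is_derive_comp (fun y => Rmin y 0 ^ 2) m x _ _ (negsq_der (m x)) Hdm).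
          simpl. unfold scal; simpl; unfold mult; simpl. ring.
        + rewrite rhs_m_eq.
          assert (HG : /2 * f x * beta * Lfac K (f x) (m x) - delta + eta2 * sqrt (m x) <= M + eta2 * sqrt B).
          { assert (H1 := prodL beta K B (f x) (f x) (m x) ltac:(lra) HK (HfB x ltac:(lra)) (HfB x ltac:(lra)) (HmB x ltac:(lra))).
            assert (H2 : sqrt (m x) <= sqrt B).
            { apply sqrt_le_1_alt. assert (H3 := HmB x ltac:(lra)). assert (H4 := Rle_abs (m x)). lra. }
            fold M in H1. nra. }
          destruct (Rlt_or_le (m x) 0).
          * rewrite Rmin_left by lra. nra.
          * rewrite Rmin_right by lra. lra. }
    destruct (Rlt_or_le (m t) 0); [|lra].
    rewrite Rmin_left in Hq by lra. nra. }
  assert (HsK : 0 < sqrt K) by (apply sqrt_lt_R0; lra).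
  assert (HVK : forall t, 0 <= t <= T -> f t + m t <= K).
  { intros t Ht.
    assert (Hq : Rmin (K - (f t + m t)) 0 ^ 2 <= 0).
    { apply (gron (fun t => Rmin (K - (f t + m t)) 0 ^ 2)
        (fun t => 2 * Rmin (K - (f t + m t)) 0 * (- (rhs_f beta delta eta1 K (f t) (m t) + rhs_m beta delta eta2 K (f t) (m t))))
        (2 * (B * eta2 / sqrt K)) T); [| | |exact Ht].
      - apply (RC_comp (fun t => K - (f t + m t)) (fun y => Rmin y 0 ^ 2)); [| apply negsq_cont].
        apply (RC_plus (fun _ => K) (fun t => - (f t + m t))).
        + apply RC_cont. apply continuous_const.
        + apply (RC_comp (fun t => f t + m t) (fun y => - y)).
          * apply RC_plus; assumption.
          * apply (ex_derive_continuous (K:=R_AbsRing) (V:=R_NormedModule)). auto_derive. auto.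
      - rewrite Rmin_right by lra. simpl; lra.
      - intros x Hx. destruct (Hder x ltac:(lra)) as [Hdf Hdm]. split.
        + assert (Hin : is_derive (fun t => K - (f t + m t)) x
                    (- (rhs_f beta delta eta1 K (f x) (m x) + rhs_m beta delta eta2 K (f x) (m x)))).
          { eapply is_derive_eq.
            apply (is_derive_minus (fun _ => K) (fun t => f t + m t) x _ _ (is_derive_const K x)
                     (is_derive_plus _ _ _ _ _ Hdf Hdm)).
            unfold minus, plus, opp, zero; simpl. ring. }
          eapply is_derive_eq. apply (is_derive_comp (fun y => Rmin y 0 ^ 2) _ x _ _ (negsq_der _) Hin).
          simpl. unfold scal; simpl; unfold mult; simpl. ring.
        + assert (F0 := Hfpos x ltac:(lra)). assert (M0 := Hmpos x ltac:(lra)).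
          destruct (Rle_or_lt 0 (K - (f x + m x))) as [Hle|Hlt].
          * rewrite Rmin_right by lra. lra.
          * rewrite Rmin_left by lra.
            set (V := f x + m x) in *.
            assert (Hsum : rhs_f beta delta eta1 K (f x) (m x) + rhs_m beta delta eta2 K (f x) (m x)
                           <= m x * (eta2 * sqrt (m x) - delta)).
            { unfold rhs_f, rhs_m, pow32, Lfac.
              assert (HL : 1 - (f x + m x) / K < 0).
              { apply Rlt_minus_l. unfold Rdiv. rewrite Rplus_0_l. 
                apply (Rmult_lt_reg_r K); [lra|]. rewrite Rmult_assoc, Rinv_l, Rmult_1_l, Rmult_1_r by lra.
                unfold V in Hlt; lra. }
              assert (H2 := sqrt_pos (f x)).
              assert (0 <= f x * m x) by nra.
              assert (f x * m x * (1 - (f x + m x) / K) <= 0) by nra.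
              assert (beta * (f x * m x * (1 - (f x + m x) / K)) <= 0) by nra.
              assert (0 <= eta1 * (f x * sqrt (f x))) by (apply Rmult_le_pos; nra).
              nra. }
            assert (HBnd : m x * (eta2 * sqrt (m x) - delta) <= (B * eta2 / sqrt K) * (V - K)).
            { assert (Hsm := sqrt_pos (m x)).
              assert (HBx : m x <= B) by (assert (H3 := HmB x ltac:(lra)); assert (H4 := Rle_abs (m x)); lra).
              assert (HC : 0 <= B * eta2 / sqrt K).
              { unfold Rdiv. apply Rmult_le_pos; [nra| left; apply Rinv_0_lt_compat; lra]. }
              destruct (Rle_or_lt (m x) K) as [HmK|HmK].
              - assert (sqrt (m x) <= sqrt K) by (apply sqrt_le_1_alt; lra).
                assert (eta2 * sqrt (m x) <= eta2 * sqrt K) by (apply Rmult_le_compat_l; lra).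
                assert (m x * (eta2 * sqrt (m x) - delta) <= 0) by nra.
                assert (0 <= (B * eta2 / sqrt K) * (V - K)) by (apply Rmult_le_pos; lra).
                lra.
              - assert (Hlt2 : sqrt K < sqrt (m x)) by (apply sqrt_lt_1_alt; lra).
                assert (Hs1 : sqrt (m x) * sqrt (m x) = m x) by (apply sqrt_sqrt; lra).
                assert (Hs2 : sqrt K * sqrt K = K) by (apply sqrt_sqrt; lra).
                assert (Hd1 : (sqrt (m x) - sqrt K) * sqrt K <= m x - K) by nra.
                assert (Hd2 : sqrt (m x) - sqrt K <= (m x - K) / sqrt K).
                { apply (Rmult_le_reg_r (sqrt K)); [lra|]. unfold Rdiv.
                  rewrite Rmult_assoc, Rinv_l, Rmult_1_r by lra. exact Hd1. }
                assert (m x * (eta2 * sqrt (m x) - delta) <= m x * eta2 * (sqrt (m x) - sqrt K)) by nra.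
                assert (Hd3 : (m x - K) / sqrt K <= (V - K) / sqrt K).
                { unfold Rdiv. apply Rmult_le_compat_r; [left; apply Rinv_0_lt_compat; lra|]. unfold V; lra. }
                assert (0 <= (m x - K) / sqrt K).
                { unfold Rdiv. apply Rmult_le_pos; [lra| left; apply Rinv_0_lt_compat; lra]. }
                assert (m x * eta2 * (sqrt (m x) - sqrt K) <= B * eta2 * ((V - K) / sqrt K)).
                { assert (0 <= sqrt (m x) - sqrt K) by lra.
                  assert (m x * eta2 * (sqrt (m x) - sqrt K) <= B * eta2 * (sqrt (m x) - sqrt K)).
                  { apply Rmult_le_compat_r; [lra|]. apply Rmult_le_compat_r; lra. }
                  assert (B * eta2 * (sqrt (m x) - sqrt K) <= B * eta2 * ((V - K) / sqrt K)).
                  { apply Rmult_le_compat_l; [nra| lra]. }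
                  lra. }
                unfold Rdiv in *. nra. }
            nra. }
    destruct (Rle_or_lt 0 (K - (f t + m t))); [lra|].
    rewrite Rmin_left in Hq by lra. nra. }
  intros t Ht. split; [|split]; auto.
Qed.

End Main.

Lemma Vineq beta delta K eta1 eta2 kap f m : 0 < beta -> 0 < K -> 0 <= eta1 -> 0 <= eta2 ->
  kap <= delta - beta * K / 4 -> kap <= delta - eta2 * sqrt K ->
  0 <= f -> 0 <= m -> f + m <= K ->
  rhs_f beta delta eta1 K f m + rhs_m beta delta eta2 K f m + kap * (f + m) <= 0.
Proof.
  intros Hb HK He1 He2 Hk1 Hk2 Hf Hm HV.
  unfold rhs_f, rhs_m, pow32.
  assert (HmL : m * Lfac K f m <= K / 4).
  { unfold Lfac.
    assert (Heq : m * (1 - (f + m) / K) = (K * m - m * (f + m)) / K) by (field; lra).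
    rewrite Heq. apply (Rmult_le_reg_r K); [lra|]. unfold Rdiv.
    rewrite Rmult_assoc, Rinv_l, Rmult_1_r by lra. assert (0 <= (m - K/2) * (m - K/2)) by apply Rle_0_sqr. assert (0 <= m * f) by nra. replace (K * / 4 * K) with (K * K / 4) by field. nra. }
  assert (H1 : beta * f * (m * Lfac K f m) <= beta * f * (K / 4)).
  { apply Rmult_le_compat_l; [nra| exact HmL]. }
  assert (H2 : 0 <= eta1 * (f * sqrt f)) by (apply Rmult_le_pos; [lra| apply Rmult_le_pos; [lra| apply sqrt_pos]]).
  assert (H3 : sqrt m <= sqrt K) by (apply sqrt_le_1_alt; lra).
  assert (H4 : eta2 * (m * sqrt m) <= eta2 * (m * sqrt K)).
  { apply Rmult_le_compat_l; [lra|]. apply Rmult_le_compat_l; lra. }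
  assert (H5 : f * (beta * K / 4 - delta + kap) <= 0) by nra.
  assert (H6 : m * (eta2 * sqrt K - delta + kap) <= 0) by nra.
  nra.
Qed.

Section Main2.
Variables (beta delta K eta1 eta2 : R).
Hypotheses (Hb : 0 < beta < 1) (Hd : 0 < delta < 1) (HK : 0 < K) (He1 : 0 <= eta1) (He2 : 0 <= eta2)
  (Hc1 : beta * K < 2 * delta - eta2 * sqrt K) (Hc2 : delta > eta2 * sqrt K).

Definition kap := Rmin (delta - beta * K / 4) (delta - eta2 * sqrt K).

Lemma kap_pos : 0 < kap.
Proof.
  unfold kap. assert (0 <= eta2 * sqrt K) by (apply Rmult_le_pos; [lra| apply sqrt_pos]).
  apply Rmin_glb_lt; lra.
Qed.

Lemma decay f m : is_solution beta delta eta1 eta2 K f m -> in_region K (f 0) (m 0) ->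
  forall t, 0 <= t -> 0 <= f t /\ 0 <= m t /\ f t + m t <= (f 0 + m 0) * exp (- (kap * t)).
Proof.
  intros Hsol Hreg t Ht.
  assert (Hinv := invariance beta delta K eta1 eta2 Hb Hd HK He1 He2 Hc2 f m Hsol Hreg (t + 1) ltac:(lra)).
  destruct Hsol as [Hf0 [Hm0 Hder]].
  assert (Hek : forall x, is_derive (fun t => exp (kap * t)) x (kap * exp (kap * x))).
  { intro x. auto_derive; [auto| ring]. }
  assert (Hle : (f t + m t) * exp (kap * t) <= (f 0 + m 0) * exp (kap * 0)).
  { apply (mono (fun t => (f t + m t) * exp (kap * t))
      (fun t => (rhs_f beta delta eta1 K (f t) (m t) + rhs_m beta delta eta2 K (f t) (m t) + kap * (f t + m t)) * exp (kap * t)) t).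
    - apply RC_mult. apply RC_plus; assumption.
      apply RC_cont. apply (ex_derive_continuous (K:=R_AbsRing) (V:=R_NormedModule)). eexists; apply Hek.
    - intros x Hx. destruct (Hder x ltac:(lra)) as [Hdf Hdm]. split.
      + eapply is_derive_eq.
        apply (is_derive_mult _ _ _ _ _ (is_derive_plus _ _ _ _ _ Hdf Hdm) (Hek x)).
        intros; apply Rmult_comm. unfold mult, plus; simpl. ring.
      + destruct (Hinv x ltac:(lra)) as [A1 [A2 A3]].
        assert (Hv := Vineq beta delta K eta1 eta2 kap (f x) (m x) ltac:(lra) HK He1 He2
                  (Rmin_l _ _) (Rmin_r _ _) A1 A2 A3).
        assert (0 < exp (kap * x)) by apply exp_pos. nra.
    - lra. }
  destruct (Hinv t ltac:(lra)) as [A1 [A2 A3]].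
  split; [exact A1|split; [exact A2|]].
  rewrite Rmult_0_r, exp_0, Rmult_1_r in Hle.
  assert (He : exp (kap * t) * exp (- (kap * t)) = 1) by (rewrite <- exp_plus; replace (kap * t + - (kap * t)) with 0 by ring; apply exp_0).
  assert (0 < exp (- (kap * t))) by apply exp_pos.
  assert (Hx : (f t + m t) * exp (kap * t) * exp (- (kap * t)) <= (f 0 + m 0) * exp (- (kap * t)))
    by (apply Rmult_le_compat_r; lra).
  rewrite Rmult_assoc, He, Rmult_1_r in Hx. exact Hx.
Qed.

End Main2.
Theorem mainTheorem13 (beta delta K eta1 eta2 : R) :
  0 < beta < 1 -> 0 < delta < 1 -> 0 < K -> 0 <= eta1 -> 0 <= eta2 ->
  beta * K < 2 * delta - eta2 * sqrt K ->
  delta > eta2 * sqrt K ->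
  GAS_origin beta delta eta1 eta2 K.
Proof.
  intros Hb Hd HK He1 He2 Hc1 Hc2.
  assert (Hk : 0 < kap beta delta K eta2) by (apply kap_pos; assumption).
  set (k := kap beta delta K eta2) in *.
  assert (Hdec : forall f m, is_solution beta delta eta1 eta2 K f m -> in_region K (f 0) (m 0) ->
    forall t, 0 <= t -> 0 <= f t /\ 0 <= m t /\ f t + m t <= (f 0 + m 0) * exp (- (k * t))).
  { intros f m Hs Hr t Ht. unfold k. apply (decay beta delta K eta1 eta2); assumption. }
  split.
  - intros eps Heps. exists eps. split; [exact Heps|].
    intros f m Hsol Hreg Hr t Ht.
    destruct (Hdec f m Hsol Hreg t Ht) as [A1 [A2 A3]].
    destruct Hreg as [R1 [R2 R3]].
    rewrite Rabs_pos_eq in Hr by lra. rewrite Rabs_pos_eq in Hr by lra.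
    rewrite Rabs_pos_eq by lra. rewrite Rabs_pos_eq by lra.
    assert (exp (- (k * t)) <= 1).
    { rewrite <- exp_0. destruct (Req_dec t 0) as [->|Hn].
      - rewrite Rmult_0_r, Ropp_0. lra.
      - left. apply exp_increasing. nra. }
    fold k in A3. nra.
  - intros f m Hsol Hreg.
    assert (Hdf := Hdec f m Hsol Hreg). fold k in Hdf.
    destruct Hreg as [R1 [R2 R3]].
    assert (HV0 : 0 <= f 0 + m 0) by lra.
    set (V0 := f 0 + m 0) in *.
    assert (Hlim : forall g : R -> R, (forall t, 0 <= t -> 0 <= g t <= V0 * exp (- (k * t))) ->
               is_lim g p_infty 0).
    { intros g Hg. apply is_lim_spec. intros eps. simpl.
      set (c := eps / (V0 + 1)).
      assert (Hc : 0 < c) by (unfold c; destruct eps; simpl; apply Rdiv_lt_0_compat; lra).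
      exists (Rmax 0 (- ln c / k)). intros x Hx.
      assert (Hx0 := Rle_lt_trans _ _ _ (Rmax_l 0 (- ln c / k)) Hx).
      assert (Hx1 := Rle_lt_trans _ _ _ (Rmax_r 0 (- ln c / k)) Hx).
      assert (Hexp : exp (- (k * x)) < c).
      { rewrite <- (exp_ln c Hc). apply exp_increasing.
        apply (Rmult_lt_compat_r k) in Hx1; [|lra].
        unfold Rdiv in Hx1. rewrite Rmult_assoc, Rinv_l, Rmult_1_r in Hx1 by lra. lra. }
      destruct (Hg x ltac:(lra)) as [G1 G2].
      rewrite Rminus_0_r, Rabs_pos_eq by lra.
      assert (0 < exp (- (k * x))) by apply exp_pos.
      assert (Hce : c * (V0 + 1) = eps) by (unfold c; field; lra).
      nra. }
    split; apply Hlim; intros t Ht; destruct (Hdf t Ht) as [A1 [A2 A3]]; lra.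
Qed.
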